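(* Let $X$ be an exponential vector space over a field $K$ such that $X\smallsetminus X_0$ has a basis and $\dim X=[\alpha:\beta]$. Let $\gamma,\delta$ be cardinal numbers with $\gamma\leq\alpha$ and $\delta\leq\beta$. Then there exists a sub exponential vector space $Y$ of $X$ with $\dim Y=[\gamma:\delta]$ (in particular $Y\smallsetminus Y_0$ has a basis).
   Context: An exponential vector space (evs) over a field $K$ is a partially ordered set $(X,\leq)$ with a binary operation $+$ on $X$ and a map $K\times X\to X$, $(\alpha,x)\mapsto \alpha x$, such that: (A1) $(X,+)$ is a commutative semigroup with identity $\theta$; (A2) $x\leq y$ implies $x+z\leq y+z$ and $\alpha x\leq \alpha y$ for all $z\in X$, $\alpha\in K$; (A3) $\alpha(x+y)=\alpha x+\alpha y$, $\alpha(\beta x)=(\alpha\beta)x$, $(\alpha+\beta)x\leq \alpha x+\beta x$, $1x=x$; (A4) $\alpha x=\theta$ iff $\alpha=0$ or $x=\theta$; (A5) $x+(-1)x=\theta$ iff $x\in X_0$, where $X_0:=\{z\in X: y\not\leq z \text{ for all } y\in X\smallsetminus\{z\}\}$ (the set of minimal elements, called the primitive space; it is a vector space over $K$); (A6) for each $x\in X$ there is $p\in X_0$ with $p\leq x$. A subset $Y\subseteq X$ is a sub exponential vector space (subevs) if $Y$ is itself an evs under the restricted operations and order; its primitive space $Y_0$ is the set of minimal elements of $Y$. For $x\in X\smallsetminus X_0$ let $L(x):=\{z\in X: z\geq \alpha x+p \text{ for some } \alpha\in K\smallsetminus\{0\},\ p\in X_0\}$ (for a subevs, testing sets are computed inside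 $Y$ using $Y_0$). A subset $B\subseteq X\smallsetminus X_0$ generates $X\smallsetminus X_0$ if $X\smallsetminus X_0=\bigcup_{b\in B}L(b)$. Elements $x,y\in X\smallsetminus X_0$ are orderly dependent if $x\in L(y)$ or $y\in L(x)$, and orderly independent otherwise; $B$ is orderly independent if any two distinct members are orderly independent. A basis of $X\smallsetminus X_0$ is an orderly independent generating subset. All bases of $X\smallsetminus X_0$ have the same cardinality, denoted $\dim(X\smallsetminus X_0)$; $\dim X_0$ is the vector-space dimension of $X_0$ (taken as $0$ if $X_0=\{\theta\}$), and $\dim X:=[\dim(X\smallsetminus X_0):\dim X_0]$. *)

(* Defs.v *)
From HB Require Import structures.
From mathcomp Require Import all_boot all_algebra.
From mathcomp Require Import boolp classical_sets cardinality.
From Stdlib Require Import List.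
Set Implicit Arguments. Unset Strict Implicit. Unset Printing Implicit Defensive.
Import GRing.Theory.
Local Open Scope classical_set_scope.
Local Open Scope ring_scope.

Record evs_struct (K : fieldType) := EvsStruct {
  ev_carrier :> Type;
  ev_le : ev_carrier -> ev_carrier -> Prop;
  ev_add : ev_carrier -> ev_carrier -> ev_carrier;
  ev_smul : K -> ev_carrier -> ev_carrier }.

Section EVS.
Variables (K : fieldType) (E : evs_struct K).
Local Notation "x <=e y" := (ev_le x y) (at level 70).
Local Notation "x +e y" := (ev_add x y) (at level 50, left associativity).
Local Notation "a *e x" := (ev_smul a x) (at level 40).

Definition prim (S : set E) : set E :=
  [set z | S z /\ forall y, S y -> y <> z -> ~ (y <=e z)].

Definition is_evs_on (S : set E) (th : E) : Prop :=
  [/\ S th,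
      (forall x y, S x -> S y -> S (x +e y)),
      (forall (a : K) x, S x -> S (a *e x)),
      [/\ (forall x, S x -> x <=e x),
          (forall x y, S x -> S y -> x <=e y -> y <=e x -> x = y) &
          (forall x y z, S x -> S y -> S z -> x <=e y -> y <=e z -> x <=e z)] &
      [/\
      [/\ (forall x y z, S x -> S y -> S z -> x +e (y +e z) = (x +e y) +e z),
          (forall x y, S x -> S y -> x +e y = y +e x) &
          (forall x, S x -> x +e th = x)],
      (forall x y z (a : K), S x -> S y -> S z -> x <=e y ->
          x +e z <=e y +e z /\ a *e x <=e a *e y),
      (forall x y (a b : K), S x -> S y ->
          [/\ a *e (x +e y) = a *e x +e a *e y,
              a *e (b *e x) = (a * b) *e x,
              (a + b) *e x <=e a *e x +e b *e x &
              1 *e x = x]),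
      (forall (a : K) x, S x -> (a *e x = th <-> a = 0 \/ x = th)) &
      (forall x, S x ->
          (x +e (-1) *e x = th <-> prim S x) /\
          (exists p, prim S p /\ p <=e x))]].

Definition testing (S : set E) (x : E) : set E :=
  [set z | S z /\ exists (a : K) p, a <> 0 /\ prim S p /\ (a *e x +e p) <=e z].

Definition evs_basis (S : set E) (B : set E) : Prop :=
  [/\ B `<=` S `\` prim S,
      S `\` prim S = \bigcup_(b in B) testing S b &
      (forall x y, B x -> B y -> x <> y ->
          ~ testing S y x /\ ~ testing S x y)].

Definition lin_comb (th : E) (l : list (K * E)%type) : E :=
  foldr (fun p acc => (p.1 *e p.2) +e acc) th l.

Definition vs_basis (S : set E) (th : E) (C : set E) : Prop :=
  [/\ C `<=` prim S,
      (forall z, prim S z ->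
          exists l : list (K * E)%type, (forall p, List.In p l -> C p.2) /\ lin_comb th l = z) &
      (forall l : list (K * E)%type, (forall p, List.In p l -> C p.2) ->
          List.NoDup (map snd l) -> lin_comb th l = th ->
          forall p, List.In p l -> p.1 = 0)].

End EVS.

(* Main.v *)
Require Import Defs.
From mathcomp Require Import all_boot all_algebra.
From mathcomp Require Import boolp classical_sets functions cardinality.
From Stdlib Require Import List.
Import GRing.Theory.
Local Open Scope classical_set_scope.
Local Open Scope ring_scope.
Set Implicit Arguments. Unset Strict Implicit.

Notation "x <=e y" := (ev_le x y) (at level 70).
Notation "x +e y" := (ev_add x y) (at level 50, left associativity).
Notation "a *e x" := (ev_smul a x) (at level 40).

Section Ax.
Context (K : fieldType) (E : evs_struct K) (th : E) (H : is_evs_on setT th).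

Lemma addA (x y z : E) : x +e (y +e z) = (x +e y) +e z.
Proof. by case: H => _ _ _ _ [[A _ _] _ _ _ _]; apply: A. Qed.
Lemma addC (x y : E) : x +e y = y +e x.
Proof. by case: H => _ _ _ _ [[_ A _] _ _ _ _]; apply: A. Qed.
Lemma add0 (x : E) : x +e th = x.
Proof. by case: H => _ _ _ _ [[_ _ A] _ _ _ _]; apply: A. Qed.
Lemma add0l (x : E) : th +e x = x.
Proof. by rewrite addC add0. Qed.
Lemma le_refl (x : E) : x <=e x.
Proof. by case: H => _ _ _ [A _ _] _; apply: A. Qed.
Lemma le_trans (x y z : E) : x <=e y -> y <=e z -> x <=e z.
Proof. by case: H => _ _ _ [_ _ A] _; apply: A. Qed.
Lemma le_addr (x y z : E) : x <=e y -> x +e z <=e y +e z.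
Proof. by case: H => _ _ _ _ [_ A _ _ _] h; case: (A x y z 0 I I I h). Qed.
Lemma le_addl (x y z : E) : x <=e y -> z +e x <=e z +e y.
Proof. by move=> h; rewrite (addC z x) (addC z y); apply: le_addr. Qed.
Lemma le_smul (a : K) (x y : E) : x <=e y -> a *e x <=e a *e y.
Proof. by case: H => _ _ _ _ [_ A _ _ _] h; case: (A x y x a I I I h). Qed.
Lemma smulD (a : K) (x y : E) : a *e (x +e y) = a *e x +e a *e y.
Proof. by case: H => _ _ _ _ [_ _ A _ _]; case: (A x y a 0 I I). Qed.
Lemma smulA (a b : K) (x : E) : a *e (b *e x) = (a * b) *e x.
Proof. by case: H => _ _ _ _ [_ _ A _ _]; case: (A x x a b I I). Qed.
Lemma smul1 (x : E) : 1 *e x = x.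
Proof. by case: H => _ _ _ _ [_ _ A _ _]; case: (A x x 1 1 I I). Qed.
Lemma smul_addle (a b : K) (x : E) : (a + b) *e x <=e a *e x +e b *e x.
Proof. by case: H => _ _ _ _ [_ _ A _ _]; case: (A x x a b I I). Qed.
Lemma smul_eq0 (a : K) (x : E) : a *e x = th <-> a = 0 \/ x = th.
Proof. by case: H => _ _ _ _ [_ _ _ A _]; apply: A. Qed.
Lemma primE (x : E) : x +e (-1) *e x = th <-> prim setT x.
Proof. by case: H => _ _ _ _ [_ _ _ _ A]; case: (A x I). Qed.
Lemma prim_below (x : E) : exists p, prim setT p /\ p <=e x.
Proof. by case: H => _ _ _ _ [_ _ _ _ A]; case: (A x I). Qed.

Lemma smul0x (x : E) : 0 *e x = th.
Proof. by apply/smul_eq0; left. Qed.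
Lemma smulx0 (a : K) : a *e th = th.
Proof. by apply/smul_eq0; right. Qed.

Lemma primN (p : E) : prim setT p -> p +e (-1) *e p = th.
Proof. by move/primE. Qed.

Lemma prim_th : prim setT th.
Proof. by apply/primE; rewrite smulx0 add0. Qed.

Lemma primD (p q : E) : prim setT p -> prim setT q -> prim setT (p +e q).
Proof.
move=> /primN hp /primN hq; apply/primE.
have e : (p +e q) +e ((-1) *e p +e (-1) *e q) = (p +e (-1) *e p) +e (q +e (-1) *e q).
  rewrite !addA; congr (_ +e _); rewrite -!addA; congr (_ +e _); exact: addC.
by rewrite smulD e hp hq add0.
Qed.

Lemma primZ (a : K) (p : E) : prim setT p -> prim setT (a *e p).
Proof.
move=> /primN hp; apply/primE.
by rewrite smulA mulrC -smulA -smulD hp smulx0.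
Qed.

Lemma prim_min (p z : E) : prim setT p -> z <=e p -> z = p.
Proof.
move=> [_ hp] hz; apply: contrapT => hne; exact: (hp z I hne hz).
Qed.

Lemma notprim_shift (b q : E) : ~ prim setT b -> prim setT q -> ~ prim setT (b +e q).
Proof.
move=> hb hq hbq; apply: hb.
have -> : b = (b +e q) +e (-1) *e q by rewrite -addA primN // add0.
by apply: primD => //; apply: primZ.
Qed.

Lemma notprim_scale (a : K) (b : E) : a != 0 -> ~ prim setT b -> ~ prim setT (a *e b).
Proof.
move=> ha hb hab; apply: hb.
have -> : b = a^-1 *e (a *e b) by rewrite smulA mulVf // smul1.
exact: primZ.
Qed.

End Ax.
Section Cons.
Context (K : fieldType) (E : evs_struct K) (th : E) (H : is_evs_on setT th) (Cp BB : set E).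
Hypothesis hCp : Cp `<=` prim setT.
Hypothesis hBnp : forall b, BB b -> ~ prim setT b.
Hypothesis hBge : forall b, BB b -> th <=e b.
Local Notation addA := (addA H).
Local Notation addC := (addC H).
Local Notation add0 := (add0 H).
Local Notation add0l := (add0l H).
Local Notation le_refl := (le_refl H).
Local Notation le_trans := (le_trans H).
Local Notation le_addr := (le_addr H).
Local Notation le_addl := (le_addl H).
Local Notation le_smul := (le_smul H).
Local Notation smulD := (smulD H).
Local Notation smulA := (smulA H).
Local Notation smul1 := (smul1 H).
Local Notation smul_addle := (smul_addle H).
Local Notation smul_eq0 := (smul_eq0 H).
Local Notation primE := (primE H).
Local Notation prim_below := (prim_below H).
Local Notation smul0x := (smul0x H).
Local Notation smulx0 := (smulx0 H).
Local Notation primN := (primN H).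
Local Notation prim_th := (prim_th H).
Local Notation primD := (primD H).
Local Notation primZ := (primZ H).
Local Notation notprim_shift := (notprim_shift H).
Local Notation notprim_scale := (notprim_scale H).

Definition V := [set z : E | exists l : list (K * E)%type,
  (forall p, In p l -> Cp p.2) /\ lin_comb th l = z].
Definition W := [set z : E | exists b (a : K) p,
  [/\ BB b, a <> 0, V p & a *e b +e p <=e z]].
Definition Y := V `|` W.

Lemma lin_prim l : (forall p, In p l -> Cp p.2) -> prim setT (lin_comb th l).
Proof.
elim: l => [|[a c] l IH] hl /=; first exact: prim_th.
apply: primD => //; first by apply: primZ => //; apply: hCp; by apply: (hl (a, c)); left.
by apply: IH => p hp; apply: hl; right.
Qed.

Lemma V_prim : V `<=` prim setT.
Proof. by move=> z [l [hl <-]]; apply: lin_prim. Qed.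

Lemma V_th : V th.
Proof. by exists nil. Qed.

Lemma lin_cat l1 l2 : lin_comb th (l1 ++ l2) = lin_comb th l1 +e lin_comb th l2.
Proof.
elim: l1 => [|x l IH] /=; first by rewrite add0l.
by rewrite IH addA.
Qed.

Lemma lin_map (a : K) l :
  a *e lin_comb th l = lin_comb th (map (fun p => (a * p.1, p.2)) l).
Proof.
elim: l => [|x l IH] /=; first by rewrite smulx0.
by rewrite smulD IH smulA.
Qed.

Lemma V_add x y : V x -> V y -> V (x +e y).
Proof.
move=> [l1 [h1 <-]] [l2 [h2 <-]]; exists (l1 ++ l2); split; last exact: lin_cat.
by move=> p hp; case: (in_app_or _ _ _ hp) => ?; [apply: h1|apply: h2].
Qed.

Lemma V_scale (a : K) x : V x -> V (a *e x).
Proof.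
move=> [l [h <-]]; exists (map (fun p => (a * p.1, p.2)) l).
split.
  move=> p hp; have [q [<- hq]] := proj1 (in_map_iff _ _ _) hp.
  exact: (h q hq).
exact: (esym (lin_map a l)).
Qed.

Lemma V_C c : Cp c -> V c.
Proof.
move=> hc; exists [:: (1, c)]; split; last by rewrite /= add0 smul1.
by move=> p [<-|[]].
Qed.

Lemma W_ge z : W z -> exists p, V p /\ p <=e z.
Proof.
move=> [b [a [p [hb ha hp hz]]]]; exists p; split => //.
apply: le_trans hz.
have := le_addr p (le_smul a (hBge hb)).
by rewrite smulx0 add0l.
Qed.

Lemma W_np z : W z -> ~ prim setT z.
Proof.
move=> [b [a [p [hb ha hp hz]]]] hpz.
have e := prim_min hpz hz.
apply: (notprim_shift (notprim_scale (a := a) _ (hBnp hb)) (V_prim hp)).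
  by apply/eqP.
by rewrite e.
Qed.

Lemma primY z : prim Y z <-> V z.
Proof.
split.
  move=> [[//|hW] hmin].
  case: (W_ge hW) => p [hp hpz].
  exfalso; apply: (hmin p (or_introl hp)) => // epz.
  by apply: (W_np hW); rewrite -epz; apply: V_prim.
move=> hz; split; first by left.
by move=> y _ hyz; case: (V_prim hz) => _ /(_ y I hyz).
Qed.

Lemma Y_add x y : Y x -> Y y -> Y (x +e y).
Proof.
have key : forall x y, W x -> Y y -> W (x +e y).
  move=> {}x {}y [b [a [p [hb ha hp hz]]]] hy.
  have [q [hq hqy]] : exists q, V q /\ q <=e y.
    by case: hy => [hy|hy]; [exists y; split => //; apply: le_refl | apply: W_ge].
  exists b, a, (p +e q); split => //; first exact: V_add.
  rewrite addA; apply: le_trans (le_addr q hz) _.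
  exact: le_addl.
move=> [hx|hx] [hy|hy].
- by left; apply: V_add.
- by right; rewrite addC; apply: key => //; left.
- by right; apply: key => //; left.
- by right; apply: key => //; right.
Qed.

Lemma Y_scale (a : K) x : Y x -> Y (a *e x).
Proof.
move=> [hx|[b [c [p [hb hc hp hz]]]]]; first by left; apply: V_scale.
have [->|ha] := eqVneq a 0; first by left; rewrite smul0x; apply: V_th.
right; exists b, (a * c), (a *e p); split => //.
- by apply/eqP; rewrite mulf_neq0 //; apply/eqP.
- exact: V_scale.
- by rewrite -smulA -smulD; apply: le_smul.
Qed.

Lemma Y_prim_iff x : Y x -> (prim setT x <-> prim Y x).
Proof.
move=> hx; rewrite primY; split; last exact: V_prim.
by case: hx => // hW /(W_np hW).
Qed.

Lemma Y_evs : is_evs_on Y th.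
Proof.
split.
- by left; apply: V_th.
- exact: Y_add.
- move=> a x; exact: Y_scale.
- split; first by move=> x _; apply: le_refl.
  + by case: H => _ _ _ [_ A _] _ x y _ _; apply: A.
  + by move=> x y z _ _ _; apply: le_trans.
- split.
  + split; move=> *; [exact: addA|exact: addC|exact: add0].
  + by move=> x y z a _ _ _ hxy; split; [apply: le_addr|apply: le_smul].
  + by move=> x y a b _ _; split; rewrite ?smulD ?smulA ?smul1 //; apply: smul_addle.
  + by move=> a x _; apply: smul_eq0.
  + move=> x hx; split.
      by rewrite -Y_prim_iff //; apply: primE.
    case: hx => [hx|hx].
      by exists x; split; [apply/primY|apply: le_refl].
    by case: (W_ge hx) => p [hp hpx]; exists p; split => //; apply/primY.
Qed.

Lemma Y_basis : (forall x y, BB x -> BB y -> x <> y -> ~ testing setT y x) ->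
  evs_basis Y BB.
Proof.
move=> hind.
have BW : forall b, BB b -> W b.
  move=> b hb; exists b, 1, th; split => //; first by apply/eqP; exact: oner_neq0.
  - exact: V_th.
  - by rewrite smul1 add0; apply: le_refl.
have tY : forall b z, testing Y b z -> testing setT b z.
  move=> b z [_ [a [p [ha [hp hz]]]]]; split; first by [].
  exists a, p; split; first by [].
  split; last by [].
  by apply: V_prim; apply/primY.
split.
- move=> b hb; split; first by right; apply: BW.
  by move/primY/V_prim; apply: hBnp.
- apply/seteqP; split.
  + move=> z [hz hnp].
    have hW : W z by case: hz => // /primY.
    case: hW => b [a [p [hb ha hp hle]]].
    exists b => //; split => //; exists a, p; split => //; split => //; exact/primY.
  + move=> z [b hb [hz [a [p [ha [hp hle]]]]]]; split => //.
    move/primY/V_prim; apply: W_np.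
    by exists b, a, p; split => //; apply/primY.
- move=> x y hx hy hxy; split => /tY.
  + exact: hind.
  + by apply: hind => // e; apply: hxy.
Qed.

Lemma Y_vs (C : set E) : vs_basis setT th C -> Cp `<=` C -> vs_basis Y th Cp.
Proof.
move=> [_ _ hind] hCC; split.
- by move=> c hc; apply/primY; apply: V_C.
- by move=> z /primY [l [hl <-]]; exists l.
- by move=> l hl; apply: hind => p /hl; apply: hCC.
Qed.

End Cons.

Lemma shift_test (K : fieldType) (E : evs_struct K) (th : E) (H : is_evs_on setT th)
  (q : E -> E) (hq : forall x, prim setT (q x) /\ q x <=e x) (x y : E) :
  testing setT (y +e (-1) *e q y) (x +e (-1) *e q x) -> testing setT y x.
Proof.
move=> [_ [a [p [ha [hp hle]]]]]; split; first by [].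
exists a, ((a *e ((-1) *e q y) +e p) +e q x); split; first by [].
split.
  apply: (primD H); last by case: (hq x).
  apply: (primD H) => //; apply: (primZ H); apply: (primZ H); by case: (hq y).
have h1 := le_addr H (q x) hle.
have e1 : x +e (-1) *e q x +e q x = x.
  by rewrite -(addA H) (addC H _ (q x)) (primN H) ?add0 //; case: (hq x).
have e2 : a *e (y +e (-1) *e q y) +e p +e q x =
          a *e y +e (a *e ((-1) *e q y) +e p +e q x).
  by rewrite (smulD H) -!(addA H).
by rewrite -e2 -{2}e1.
Qed.

Local Open Scope card_scope.

Theorem mainTheorem9 (K : fieldType) (E : evs_struct K) (th : E)
    (B C : set E) (TG TD : Type) (G : set TG) (D : set TD) :
  is_evs_on setT th ->
  evs_basis setT B ->
  vs_basis setT th C ->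
  G #<= B -> D #<= C ->
  exists (Y : set E) (thY : E) (BY CY : set E),
    [/\ is_evs_on Y thY,
        evs_basis Y BY,
        vs_basis Y thY CY,
        BY #= G &
        CY #= D].
Proof.
move=> H hB hC hGB hDC.
have [q hq] : {q : E -> E & forall x, prim setT (q x) /\ q x <=e x}.
  by exists (fun x => proj1_sig (cid (prim_below H x))) => x; case: (cid _).
pose shift (b : E) := b +e (-1) *e q b.
have [gf [hgB hginj]] : exists F : G -> E, (forall s, B (F s)) /\ injective F.
  case/card_leP: hGB => f; exists (fun s => val (f s)); split.
    move=> s; exact: set_valP.
  by move=> x y /val_inj; apply: (@inj _ _ _ f); apply: mem_set.
have [hf [hfC hfinj]] : exists F : D -> E, (forall s, C (F s)) /\ injective F.
  case/card_leP: hDC => f; exists (fun s => val (f s)); split.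
    move=> s; exact: set_valP.
  by move=> x y /val_inj; apply: (@inj _ _ _ f); apply: mem_set.
case: hB => hBsub _ hBind.
have hBnp0 : forall b, B b -> ~ prim setT b by move=> b /hBsub [].
have hCprim : C `<=` prim setT by case: hC.
pose BB := [set shift (gf s) | s in [set: G]].
pose Cp := [set hf s | s in [set: D]].
have hCp : Cp `<=` prim setT by move=> z [s _ <-]; apply: hCprim.
have hBnp : forall b, BB b -> ~ prim setT b.
  move=> b [s _ <-]; apply: (notprim_shift H (hBnp0 _ (hgB s))).
  by apply: (primZ H); case: (hq (gf s)).
have hBge : forall b, BB b -> th <=e b.
  move=> b [s _ <-]; rewrite /shift.
  have [hqp hqle] := hq (gf s).
  have := le_addr H ((-1) *e q (gf s)) hqle.
  by rewrite (primN H).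
have stest := shift_test H hq.
have shift_inj : forall x y, B x -> B y -> shift x = shift y -> x = y.
  move=> x y hx hy e; apply: contrapT => hxy.
  apply: (proj1 (hBind x y hx hy hxy)).
  apply: stest; rewrite -/(shift x) -/(shift y) e.
  split; first by []. exists 1, th; split; first by apply/eqP; exact: oner_neq0.
  split; first exact: (prim_th H).
  by rewrite (smul1 H) (add0 H); apply: (le_refl H).
exists (Y th Cp BB), th, BB, Cp; split.
- exact: Y_evs.
- apply: Y_basis => // x y [s1 _ <-] [s2 _ <-] hne /stest ht.
  have hne' : gf s1 <> gf s2 by move=> e; apply: hne; rewrite e.
  exact: (proj1 (hBind _ _ (hgB s1) (hgB s2) hne')).
- apply: (Y_vs H hCp hBnp hBge hC).
  by move=> z [s _ <-]; apply: hfC.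
- apply: card_eq_trans (card_setT G).
  apply: inj_card_eq => s1 s2 _ _ e.
  by apply: hginj; apply: shift_inj => //.
- apply: card_eq_trans (card_setT D).
  by apply: inj_card_eq => s1 s2 _ _ e; apply: hfinj.
Qed.
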